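(* Let $N$ be large enough that $g(N)<N$, $(N-1)\sqrt{\frac{\ln N}{N}}\ge\frac{8h}{\sqrt5}$, and $\left(N-\frac32\right)\ln\left(1+\sqrt{\frac{5\ln N}{N}}\right)\ge8h$. Then in any round $r$, with probability at least $1-\frac{6M+3}{N^{10}}$, $$\xi_0\ge1-\sqrt{\frac{5\ln N}{N}}\qquad\text{and}\qquad\xi_1\le1+\sqrt{\frac{5\ln N}{N}},$$ where $\xi_0=\left(1-\frac{2}{N^2+1}\right)^{V^r_i}\left(1-\frac{2}{N^3-N^2+1}\right)^{V^r-V^r_i}$ and $\xi_1=\left(1+\frac{2}{N^2-1}\right)^{V^r_i}\left(1+\frac{2}{N^3-N^2-1}\right)^{V^r-V^r_i}$.
   Context: Setting. $\mathcal G=(\mathcal N,\mathcal E)$ is a connected, non-bipartite undirected graph on agents $\mathcal N=\{1,\dots,N\}$; $\mathcal N_i$ is the neighbor set of $i$, $N_i=|\mathcal N_i|$. There are $M$ options; quality signals $\Phi_j^r\in\{0,1\}$ are i.i.d. Bernoulli$(\eta_j)$ over rounds. $X^r_{i,j}\in\{0,1\}$ indicates agent $i$ adopts option $j$ in round $r$ ($\sum_jX^r_{i,j}\le1$). The function $g:\mathbb N^+\to\mathbb R$ satisfies: for every $\ell>0$, $g(N)>\ell\ln N$ and $g(N)<\ell N$ for all sufficiently large $N$. Parameters: $\varepsilon>0$, $\mu\in(0,1)$, $\beta\in(1/2,1)$, $\sigma\ge11$, $h=16\sigma/(1-\beta)$. Metropolis–Hastings random walk: from $i$ move to $i'\in\mathcal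 N_i$ with probability $\min\{1/N_i,1/N_{i'}\}$, else stay; walk length $L=O(\log N)$ chosen so that the endpoint is at each agent with probability in $[\frac1N-\frac1{N^3},\frac1N+\frac1{N^3}]$. Round $r$: (1) an agent that adopted an option in round $r-1$ perturbs each coordinate of its adoption vector independently (keep with probability $\frac{e^{\varepsilon/2}}{e^{\varepsilon/2}+1}$, flip otherwise); (2) each such agent launches $hg(N)$ independent random-walk tokens of length $L$ carrying its perturbed vector (forwarded via per-agent FIFO queues, up to $hg(N)$ tokens per agent per slot); a token is sampled by the agent where it ends; $V^r$ is the total number of tokens and $V^r_i$ the number sampled by $i$; (3) with $\Lambda^r_{i,j}$ the fraction of $i$'s sampled vectors with $j$-th coordinate $1$, $\widetilde Q^r_{i,j}=\max\{\frac{e^{\varepsilon/2}+1}{e^{\varepsilon/2}-1}\Lambda^r_{i,j}-\frac1{e^{\varepsilon/2}-1},0\}$, $\widehat Q^r_{i,j}=\widetilde Q^r_{i,j}/\sum_{j'}\widetilde Q^r_{i,j'}$, and $i$ selects option $j$ with probability $(1-\mu)\widehat Q^r_{i,j}+\mu/M$; (4) having selected $j^*$, $i$ adopts it with probability $\beta$ if $\Phi^r_{j^*}=1$, $1-\beta$ if $\Phi^r_{j^*}=0$, else adopts nothing. *)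

(* Defs.v *)
From HB Require Import structures.
From mathcomp Require Import all_boot all_order all_algebra.
From mathcomp Require Import reals exp.
Set Implicit Arguments. Unset Strict Implicit. Unset Printing Implicit Defensive.
Import Order.TTheory GRing.Theory Num.Theory.
Local Open Scope ring_scope.

Definition undirected_simple (N : nat) (adj : rel 'I_N) : Prop :=
  (forall a b, adj a b = adj b a) /\ (forall a, ~~ adj a a).

Definition graph_connected (N : nat) (adj : rel 'I_N) : Prop :=
  forall a b, connect adj a b.

Definition non_bipartite (N : nat) (adj : rel 'I_N) : Prop :=
  ~ (exists col : 'I_N -> bool, forall a b, adj a b -> col a != col b).

Definition ndeg (N : nat) (adj : rel 'I_N) (a : 'I_N) : nat :=
  #|[set b | adj a b]|.

Definition mh (R : realType) (N : nat) (adj : rel 'I_N) (a b : 'I_N) : R :=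
  if adj a b then Num.min (ndeg adj a)%:R^-1 (ndeg adj b)%:R^-1
  else if a == b then
    1 - \sum_(c | adj a c) Num.min (ndeg adj a)%:R^-1 (ndeg adj c)%:R^-1
  else 0.

Fixpoint walkprob (R : realType) (N : nat) (adj : rel 'I_N) (L : nat)
  (a b : 'I_N) : R :=
  match L with
  | 0 => (a == b)%:R
  | L'.+1 => \sum_(c : 'I_N) @walkprob R N adj L' a c * @mh R N adj c b
  end.

(* Tokens of a round: agent s in the adopter set S launches T tokens,
   token (s, t) for t < T. *)
Definition token (N T : nat) (S : {set 'I_N}) : finType :=
  {k : 'I_N * 'I_T | k.1 \in S}.

(* An outcome assigns to every token the agent where its walk ends. *)
Definition outcome (N T : nat) (S : {set 'I_N}) : finType :=
  {ffun token T S -> 'I_N}.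

(* probability of an outcome: the walks are independent *)
Definition outcome_prob (R : realType) (N : nat) (adj : rel 'I_N) (L T : nat)
  (S : {set 'I_N}) (w : outcome T S) : R :=
  \prod_(k : token T S) @walkprob R N adj L (val k).1 (w k).

Definition Prob (R : realType) (N : nat) (adj : rel 'I_N) (L T : nat)
  (S : {set 'I_N}) (E : pred (outcome T S)) : R :=
  \sum_(w : outcome T S | E w) @outcome_prob R N adj L T S w.

(* V^r = total number of tokens, V^r_i = number sampled by i *)
Definition Vtot (N T : nat) (S : {set 'I_N}) : nat := #|token T S|.
Definition Vsampled (N T : nat) (S : {set 'I_N}) (i : 'I_N) (w : outcome T S)
  : nat := #|[set k | w k == i]|.

Definition xi0 (R : realType) (N : nat) (V Vi : nat) : R :=
  (1 - 2 / (N%:R ^+ 2 + 1)) ^+ Vi * (1 - 2 / (N%:R ^+ 3 - N%:R ^+ 2 + 1)) ^+ (V - Vi).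
Definition xi1 (R : realType) (N : nat) (V Vi : nat) : R :=
  (1 + 2 / (N%:R ^+ 2 - 1)) ^+ Vi * (1 + 2 / (N%:R ^+ 3 - N%:R ^+ 2 - 1)) ^+ (V - Vi).

(* Main.v *)
Require Import Defs.
From HB Require Import structures.
From mathcomp Require Import all_boot all_order all_algebra.
From mathcomp Require Import reals exp.
From mathcomp Require Import sequences ring lra.
Import Order.TTheory GRing.Theory Num.Theory.
Local Open Scope ring_scope.

Lemma bern (R : realType) (a : R) (k : nat) : 0 <= a <= 1 -> 1 - k%:R * a <= (1 - a) ^+ k.
Proof.
move=> /andP[a0 a1]; elim: k => [|k IH]; first by rewrite mul0r subr0 expr0.
rewrite exprS -natr1.
have h1 : 0 <= 1 - a by rewrite subr_ge0.
have h2 : (1 - a) * (1 - k%:R * a) <= (1 - a) * (1 - a) ^+ k by rewrite ler_wpM2l.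
have h3 : 0 <= k%:R * a * a by rewrite !mulr_ge0.
apply: le_trans h2; nra.
Qed.

Lemma mh_sum (R : realType) N (adj : rel 'I_N) (Hirr : forall a, ~~ adj a a) c :
  \sum_b @mh R N adj c b = 1.
Proof.
rewrite (bigID (adj c)) /=.
set S := \sum_(b | adj c b) _.
have -> : \sum_(b | ~~ adj c b) @mh R N adj c b = 1 - \sum_(d | adj c d) Num.min (ndeg adj c)%:R^-1 (ndeg adj d)%:R^-1.
  rewrite (bigD1 c) ?Hirr //=.
  rewrite [X in _ + X]big1 ?addr0; first by rewrite /mh (negbTE (Hirr c)) eqxx.
  move=> b /andP[/negbTE nadj nb].
  by rewrite /mh nadj eq_sym (negbTE nb).
rewrite /S.
have -> : \sum_(b | adj c b) @mh R N adj c b = \sum_(d | adj c d) Num.min (ndeg adj c)%:R^-1 (ndeg adj d)%:R^-1.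
  by apply: eq_bigr => b hb; rewrite /mh hb.
by rewrite addrC subrK.
Qed.

Lemma walk_sum (R : realType) N (adj : rel 'I_N) (Hirr : forall a, ~~ adj a a) L a :
  \sum_b @walkprob R N adj L a b = 1.
Proof.
elim: L a => [|L IH] a /=.
  rewrite (bigD1 a) //= eqxx big1 ?addr0 // => b nb.
  by rewrite eq_sym (negbTE nb).
rewrite exchange_big /=.
under eq_bigr do rewrite -mulr_sumr mh_sum // mulr1.
exact: IH.
Qed.

Lemma total_prob (R : realType) N (adj : rel 'I_N) (Hirr : forall a, ~~ adj a a) L T S :
  \sum_(w : outcome T S) @outcome_prob R N adj L T S w = 1.
Proof.
rewrite /outcome_prob.
rewrite -(bigA_distr_bigA (fun (k : token T S) b => @walkprob R N adj L (val k).1 b)).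
by apply: big1 => k _; rewrite walk_sum.
Qed.

Lemma gen_fun (R : realType) N (adj : rel 'I_N) L T S (i : 'I_N) :
  \sum_(w : outcome T S) @outcome_prob R N adj L T S w * expR ((Vsampled i w)%:R / 2)
  = \prod_(k : token T S) \sum_b (@walkprob R N adj L (val k).1 b * expR ((b == i)%:R / 2)).
Proof.
rewrite (bigA_distr_bigA (fun (k : token T S) b => @walkprob R N adj L (val k).1 b * expR ((b == i)%:R / 2))).
apply: eq_bigr => w _.
rewrite big_split /= -expR_sum -mulr_suml.
congr (_ * expR (_ / 2)).
rewrite /Vsampled.
have -> : \sum_(k : token T S) ((w k == i)%:R : R) = \sum_(k | w k == i) 1.
  by rewrite [RHS]big_mkcond /=; apply: eq_bigr => k _; case: (w k == i).
by rewrite sumr_const cardsE.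
Qed.

Lemma det (R : realType) (N V Vi : nat) (h d : R) :
  2 <= (N%:R : R) -> 0 < h -> V%:R <= h * N%:R ^+ 2 -> 2 * Vi%:R < 5 * h * N%:R ->
  8 * h / (N%:R - 1) <= d -> 8 * h / (N%:R - 3 / 2) <= ln (1 + d) -> 0 <= d ->
  (1 - d <= xi0 R N V Vi) && (xi1 R N V Vi <= 1 + d).
Proof.
set n : R := N%:R => n2 h0 HV HVi Hd1 Hd2 d0.
have Hk : (V - Vi)%:R <= h * n ^+ 2.
  by apply: le_trans HV; rewrite ler_nat leq_subr.
have k0 : 0 <= ((V - Vi)%:R : R) by [].
have vi0 : 0 <= (Vi%:R : R) by [].
set k := (V - Vi)%:R in Hk k0.
have p1 : 0 < n ^+ 2 + 1 by nra.
have p2 : 0 < n ^+ 3 - n ^+ 2 + 1 by rewrite !exprS expr0; nra.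
have p3 : 0 < n - 1 by lra.
have p4 : 0 < n ^+ 2 - 1 by nra.
have p5 : 0 < n - 3 / 2 by lra.
have p6 : 0 < n ^+ 3 - n ^+ 2 - 1 by rewrite !exprS expr0; nra.
apply/andP; split.
  rewrite /xi0 -/n.
  set a := 2 / (n ^+ 2 + 1).
  set b := 2 / (n ^+ 3 - n ^+ 2 + 1).
  have a01 : 0 <= a <= 1.
    by rewrite /a divr_ge0 ?(ltW p1) //= ler_pdivrMr // mul1r; nra.
  have b01 : 0 <= b <= 1.
    by rewrite /b divr_ge0 ?(ltW p2) //= ler_pdivrMr // mul1r; rewrite !exprS expr0; nra.
  have X1 := bern _ a Vi a01.
  have Y1 := bern _ b (V - Vi) b01.
  have X0 : 0 <= (1 - a) ^+ Vi by rewrite exprn_ge0 // subr_ge0; case/andP: a01.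
  have Y0 : 0 <= (1 - b) ^+ (V - Vi) by rewrite exprn_ge0 // subr_ge0; case/andP: b01.
  have X2 : (1 - a) ^+ Vi <= 1 by rewrite exprn_ile1 // ?subr_ge0 ?gerBl; case/andP: a01.
  have Y2 : (1 - b) ^+ (V - Vi) <= 1 by rewrite exprn_ile1 // ?subr_ge0 ?gerBl; case/andP: b01.
  have ea : Vi%:R * a <= 5 * h / (n - 1).
    rewrite /a mulrA ler_pdivrMr // (mulrAC (5 * h)) ler_pdivlMr //; nra.
  have eb : k * b <= 2 * h / (n - 1).
    rewrite /b mulrA ler_pdivrMr // (mulrAC (2 * h)) ler_pdivlMr //.
    rewrite !exprS expr0; rewrite !exprS expr0 in Hk; nra.
  have e8 : 5 * h / (n - 1) + 2 * h / (n - 1) <= 8 * h / (n - 1).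
    rewrite -mulrDl ler_pM2r ?invr_gt0 //; lra.
  rewrite -/k in Y1.
  nra.
rewrite /xi1 -/n.
set c := 2 / (n ^+ 2 - 1).
set e := 2 / (n ^+ 3 - n ^+ 2 - 1).
have c0 : 0 <= c by rewrite /c divr_ge0 ?(ltW p4).
have e0 : 0 <= e by rewrite /e divr_ge0 ?(ltW p6).
have X : (1 + c) ^+ Vi <= expR (Vi%:R * c).
  by rewrite expRM_natl lerXn2r ?expR_ge1Dx // nnegrE ?expR_ge0 //; lra.
have Y : (1 + e) ^+ (V - Vi) <= expR (k * e).
  by rewrite expRM_natl lerXn2r ?expR_ge1Dx // nnegrE ?expR_ge0 //; lra.
have ec : Vi%:R * c <= 5 * h / (n - 3 / 2).
  rewrite /c mulrA ler_pdivrMr // (mulrAC (5 * h)) ler_pdivlMr //; nra.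
have ee : k * e <= 2 * h / (n - 3 / 2).
  rewrite /e mulrA ler_pdivrMr // (mulrAC (2 * h)) ler_pdivlMr //.
  rewrite !exprS expr0; rewrite !exprS expr0 in Hk; nra.
have e8 : 5 * h / (n - 3 / 2) + 2 * h / (n - 3 / 2) <= 8 * h / (n - 3 / 2).
  rewrite -mulrDl ler_pM2r ?invr_gt0 //; lra.
have : expR (Vi%:R * c) * expR (k * e) <= 1 + d.
  rewrite -expRD -[X in _ <= X]lnK ?posrE; last lra.
  rewrite ler_expR; lra.
have X0 : 0 <= (1 + c) ^+ Vi by rewrite exprn_ge0 //; lra.
have Y0 : 0 <= (1 + e) ^+ (V - Vi) by rewrite exprn_ge0 //; lra.
apply: le_trans.
by apply: ler_pM.
Qed.

Lemma expR_half_le2 (R : realType) : expR (1 / 2 : R) <= 2.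
Proof.
have e1 := expR_ge1Dx (- (1 / 2) : R).
have e2 := expRxMexpNx_1 (1 / 2 : R).
have e3 := expR_gt0 (1 / 2 : R).
nra.
Qed.

Lemma main_prob (R : realType) N (adj : rel 'I_N) (Hirr : forall a, ~~ adj a a)
  L T (S : {set 'I_N}) (i : 'I_N) (h : R) (M : nat)
  (E : pred (outcome T S)) :
  (0 < M)%N -> 176 <= h -> 10 <= (N%:R : R) -> T%:R < h * N%:R ->
  (forall a b : 'I_N,
     N%:R^-1 - (N%:R ^+ 3)^-1 <= @walkprob R N adj L a b <= N%:R^-1 + (N%:R ^+ 3)^-1) ->
  (forall w, 2 * (Vsampled i w)%:R < 5 * h * N%:R -> E w) ->
  @Prob R N adj L T S E >= 1 - (6 * M + 3)%:R / N%:R ^+ 10.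
Proof.
set n : R := N%:R => M0 hge n10 HT Hw HE.
set P := @outcome_prob R N adj L T S.
set q := n^-1 + (n ^+ 3)^-1.
have n0 : 0 < n by lra.
have wp0 : forall a b, 0 <= @walkprob R N adj L a b.
  move=> a b; apply: le_trans (andP (Hw a b)).1.
  rewrite subr_ge0 lef_pV2 ?posrE ?exprn_gt0 //.
  rewrite !exprS expr0; nra.
have wpq : forall a b, @walkprob R N adj L a b <= q by move=> a b; case/andP: (Hw a b).
have P0 : forall w, 0 <= P w by move=> w; apply: prodr_ge0 => k _.
have tot := total_prob R N adj Hirr L T S.
rewrite -/P (bigID E) /= in tot.
rewrite /Prob -/P.
set th := 5 * h * n / 4.
have bad : \sum_(w | ~~ E w) P w <= (\sum_w P w * expR ((Vsampled i w)%:R / 2)) * expR (- th).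
  rewrite mulr_suml.
  apply: le_trans (_ : \sum_(w | ~~ E w) P w * expR ((Vsampled i w)%:R / 2) * expR (- th) <= _).
    apply: ler_sum => w Hw'.
    have : th <= (Vsampled i w)%:R / 2.
      rewrite leNgt; apply/negP => H; move/negP: Hw'; apply; apply: HE.
      rewrite /th in H; lra.
    move=> Hth.
    rewrite -mulrA -expRD -[X in X <= _]mulr1 ler_wpM2l //.
    apply: le_trans (expR_ge1Dx _); lra.
  rewrite [X in _ <= X](bigID (fun w => ~~ E w)) /= lerDl.
  by apply: sumr_ge0 => w _; rewrite !mulr_ge0 ?expR_ge0 ?P0.
rewrite gen_fun in bad.
have hp : \prod_(k : token T S) \sum_b (@walkprob R N adj L (val k).1 b * expR ((b == i)%:R / 2))
          <= \prod_(k : token T S) expR (@walkprob R N adj L (val k).1 i).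
  apply: ler_prod => k _; apply/andP; split.
    by apply: sumr_ge0 => b _; rewrite mulr_ge0 ?expR_ge0.
  apply: le_trans (_ : \sum_b @walkprob R N adj L (val k).1 b * (1 + (b == i)%:R) <= _).
    apply: ler_sum => b _; apply: ler_wpM2l => //.
    case: (b == i) => /=; last by rewrite mul0r expR0 addr0.
    by rewrite expR_half_le2.
  under eq_bigr do rewrite mulrDr mulr1.
  rewrite big_split /= walk_sum //.
  rewrite (bigD1 i) //= eqxx mulr1 big1 ?addr0; first exact: expR_ge1Dx.
  by move=> b /negbTE ->; rewrite mulr0.
rewrite -expR_sum in hp.
have Vle : ((Vtot T S)%:R : R) <= n * T%:R.
  rewrite /n -natrM ler_nat /Vtot /token card_sig.
  by apply: leq_trans (max_card _) _; rewrite card_prod !card_ord.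
have sq : \sum_(k : token T S) @walkprob R N adj L (val k).1 i <= (Vtot T S)%:R * q.
  apply: le_trans (_ : \sum_(k : token T S) q <= _); first by apply: ler_sum.
  by rewrite sumr_const /Vtot mulr_natl.
have nq : n * q <= 11 / 10.
  rewrite /q mulrDr mulfV ?gt_eqF //.
  have : n / n ^+ 3 <= 1 / 10.
    rewrite ler_pdivrMr ?exprn_gt0 // mulrAC ler_pdivlMr //; rewrite !exprS expr0; nra.
  lra.
have T0 : 0 <= (T%:R : R) by [].
have q0 : 0 <= q by apply: le_trans (wpq i i).
have Vq : (Vtot T S)%:R * q <= T%:R * (11 / 10).
  apply: le_trans (_ : n * T%:R * q <= _); first by rewrite ler_wpM2r.
  by rewrite (mulrC n) -mulrA ler_wpM2l.
have expo : expR (\sum_(k : token T S) @walkprob R N adj L (val k).1 i) * expR (- th) <= expR (- (10 * n)).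
  have := ler_wpM2r (ltW n0) hge.
  rewrite -expRD ler_expR /th; lra.
have fin : expR (- (10 * n)) <= (n ^+ 10)^-1.
  rewrite expRN expRM_natl lef_pV2 ?posrE ?exprn_gt0 ?expR_gt0 //.
  rewrite lerXn2r ?nnegrE ?expR_ge0 //. all: try (apply: le_trans (expR_ge1Dx _); lra).
have fin2 : (n ^+ 10)^-1 <= (6 * M + 3)%:R / n ^+ 10.
  rewrite -[X in X <= _]mul1r ler_wpM2r ?invr_ge0 ?exprn_ge0 //. 
  by rewrite ler1n addn3.
have e0 : 0 <= expR (- th) by exact: expR_ge0.
have : \sum_(w | ~~ E w) P w <= (6 * M + 3)%:R / n ^+ 10.
  apply: le_trans bad _.
  apply: le_trans (_ : expR (\sum_(k : token T S) @walkprob R N adj L (val k).1 i) * expR (- th) <= _).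
    by rewrite ler_wpM2r.
  by apply: le_trans expo _; apply: le_trans fin _.
lra.
Qed.

Theorem lemma8 (R : realType) (N : nat) (adj : rel 'I_N)
  (M : nat) (sigma beta : R) (g : nat -> R) (T L : nat)
  (S : {set 'I_N}) (i : 'I_N) :
  undirected_simple adj -> graph_connected adj -> non_bipartite adj ->
  (0 < M)%N ->
  11 <= sigma -> 2^-1 < beta < 1 ->
  (forall l : R, 0 < l -> exists N0 : nat, forall n : nat, (N0 <= n)%N ->
       l * ln n%:R < g n /\ g n < l * n%:R) ->
  T%:R = 16 * sigma / (1 - beta) * g N ->
  (forall a b : 'I_N,
     N%:R^-1 - (N%:R ^+ 3)^-1 <= @walkprob R N adj L a b <= N%:R^-1 + (N%:R ^+ 3)^-1) ->
  g N < N%:R ->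
  (N%:R - 1) * Num.sqrt (ln N%:R / N%:R) >= 8 * (16 * sigma / (1 - beta)) / Num.sqrt 5 ->
  (N%:R - 3 / 2) * ln (1 + Num.sqrt (5 * ln N%:R / N%:R)) >= 8 * (16 * sigma / (1 - beta)) ->
  @Prob R N adj L T S
    (fun w => (1 - Num.sqrt (5 * ln N%:R / N%:R) <= xi0 R N (Vtot T S) (Vsampled i w))
           && (xi1 R N (Vtot T S) (Vsampled i w) <= 1 + Num.sqrt (5 * ln N%:R / N%:R)))
  >= 1 - (6 * M + 3)%:R / N%:R ^+ 10.
Proof.
move=> [_ Hirr] _ _ M0 Hsig /andP[Hb1 Hb2] _ HT Hw HgN H1 H2.
set n : R := N%:R in HT Hw HgN H1 H2 *.
set h := 16 * sigma / (1 - beta) in HT H1 H2 *.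
set d := Num.sqrt (5 * ln n / n) in H2 *.
have N0 : (0 < N)%N := leq_ltn_trans (leq0n _) (ltn_ord i).
have n1 : 1 <= n by rewrite /n ler1n.
have n0 : 0 < n by lra.
have b0 : 0 < 1 - beta by lra.
have hge : 176 <= h by rewrite /h ler_pdivlMr //; nra.
have s5a : Num.sqrt 5 ^+ 2 = 5 :> R by rewrite sqr_sqrtr.
have s5b : 0 <= Num.sqrt 5 :> R by exact: sqrtr_ge0.
have s5c : Num.sqrt 5 <= 3 :> R by nra.
have s5d : 0 < Num.sqrt 5 :> R by rewrite sqrtr_gt0.
set s := Num.sqrt (ln n / n) in H1.
have s0 : 0 <= s by exact: sqrtr_ge0.
have s1 : s <= 1.
  rewrite /s -sqrtr1 ler_sqrt // ler_pdivrMr // mul1r.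
  exact: ltW (ln_sublinear n0).
have Hd : d = Num.sqrt 5 * s by rewrite /d /s -mulrA sqrtrM.
rewrite ler_pdivrMr // in H1.
have ss : s * Num.sqrt 5 <= 3 by nra.
have big : 401 <= n by nra.
have Hd1 : 8 * h / (n - 1) <= d by rewrite ler_pdivrMr ?Hd; lra.
have d0 : 0 <= d by rewrite Hd mulr_ge0.
have Hd2 : 8 * h / (n - 3 / 2) <= ln (1 + d) by rewrite ler_pdivrMr; lra.
have h0 : 0 < h by lra.
have HT' : T%:R < h * n by rewrite HT ltr_pM2l.
apply: (main_prob R N adj Hirr L T S i h M) => //; first lra.
move=> w Hw'.
apply: (det R N _ _ h d) => //; first lra.
have Vle : ((Vtot T S)%:R : R) <= n * T%:R.
  rewrite /n -natrM ler_nat /Vtot /token card_sig.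
  by apply: leq_trans (max_card _) _; rewrite card_prod !card_ord.
rewrite expr2; nra.
Qed.
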